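(* There is an absolute constant $C$ such that for all positive integers $d$ and all $x\in\mathbb{R}$ with $|x|\le\sqrt d$, $$|r_d(x)|\le C\max\left\{\frac{|x|^3}{\sqrt d},\frac{|x|}{\sqrt d},\frac{x^2}{d},\frac1d\right\}.$$
   Context: The Hermite polynomials $(H_k)_{k\ge0}$ are the orthonormal polynomials for $\mathcal{N}(0,1)$ with $\deg H_k=k$ and positive leading coefficient (the probabilist's Hermite polynomials divided by $\sqrt{k!}$). The remainder $r_d(x)$ is defined by $$H_d(x)=\exp\!\left(\frac{x^2}{4}\right)\left(\frac{2}{\pi d}\right)^{1/4}\left(\sin\!\left[\frac{1-d}{2}\pi+\sqrt d\,x\right]+r_d(x)\right).$$ *)

(* Defs.v *)
From Stdlib Require Import Reals Lra Lia Factorial.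
Open Scope R_scope.

(* Probabilist's Hermite polynomials He_k, evaluated at x, via the standard
   three-term recurrence He_0 = 1, He_1 = x, He_{k+1} = x He_k - k He_{k-1}.
   He_pair k x = (He_k x, He_{k+1} x). *)
Fixpoint He_pair (k : nat) (x : R) : R * R :=
  match k with
  | O => (1, x)
  | S k' => let (a, b) := He_pair k' x in (b, x * b - INR (S k') * a)
  end.

Definition He (k : nat) (x : R) : R := fst (He_pair k x).

(* Orthonormal Hermite polynomials for N(0,1): H_k = He_k / sqrt(k!). *)
Definition H (k : nat) (x : R) : R := He k x / sqrt (INR (Factorial.fact k)).

(* The remainder r_d(x), defined (for d >= 1) by
   H_d(x) = exp(x^2/4) (2/(pi d))^(1/4) (sin((1-d)/2 pi + sqrt d x) + r_d(x)). *)
Definition r (d : nat) (x : R) : R :=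
  H d x / (exp (x ^ 2 / 4) * Rpower (2 / (PI * INR d)) (1 / 4))
  - sin ((1 - INR d) / 2 * PI + sqrt (INR d) * x).

(* Main.v *)
Require Import Defs.
From Stdlib Require Import Reals Lra Lia Factorial Arith.
From Coquelicot Require Import Coquelicot.
Open Scope R_scope.


Lemma is_derive_extR (f g : R -> R) (x l : R) :
  (forall t, f t = g t) -> is_derive f x l -> is_derive g x l.
Proof. apply is_derive_ext. Qed.

Lemma Derive_eta (f : R -> R) x l : is_derive f x l -> Derive (fun t => f t) x = l.
Proof. intro H. apply (is_derive_unique (fun t => f t)). exact H. Qed.

Lemma He_0 x : He 0 x = 1. Proof. reflexivity. Qed.
Lemma He_1 x : He 1 x = x. Proof. reflexivity. Qed.
Lemma He_S k x : He (S k) x = snd (He_pair k x).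
Proof. unfold He; simpl; destruct (He_pair k x); reflexivity. Qed.
Lemma He_SS k x : He (S (S k)) x = x * He (S k) x - INR (S k) * He k x.
Proof.
  rewrite !He_S. unfold He. simpl. destruct (He_pair k x). simpl. reflexivity.
Qed.

Lemma He_pair_opp k x :
  He_pair k (-x) = ((-1)^k * fst (He_pair k x), (-1)^(S k) * snd (He_pair k x)).
Proof.
  induction k; simpl.
  - f_equal; ring.
  - rewrite IHk. destruct (He_pair k x) as [a b]. simpl. f_equal; ring.
Qed.

Lemma He_opp k x : He k (-x) = (-1)^k * He k x.
Proof. unfold He. rewrite He_pair_opp. reflexivity. Qed.

Lemma He_odd0 m : He (S (2*m)) 0 = 0.
Proof.
  pose proof (He_opp (S (2*m)) 0) as H. rewrite Ropp_0 in H.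
  rewrite pow_1_odd in H. lra.
Qed.

Definition dHe (k : nat) (x : R) : R :=
  match k with O => 0 | S j => INR (S j) * He j x end.

Lemma He_deriv_S k : forall x, is_derive (He (S k)) x (INR (S k) * He k x).
Proof.
  cut (forall x, is_derive (He (S k)) x (INR (S k) * He k x) /\
                 is_derive (He (S (S k))) x (INR (S (S k)) * He (S k) x)).
  { intros H x; apply H. }
  induction k; intro x.
  - split.
    + apply (is_derive_extR (fun x => x)). { intros; reflexivity. }
      replace (INR 1 * He 0 x) with 1 by (rewrite He_0; simpl; idtac; ring). apply (is_derive_id x).
    + apply (is_derive_extR (fun x => x * x - 1)).
      { intros t. rewrite He_SS, He_1, He_0. change (INR 1) with 1. ring. }
      auto_derive; auto. rewrite He_1. change (INR 2) with 2. ring.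
  - split. { apply IHk. }
    apply (is_derive_extR (fun x => x * He (S (S k)) x - INR (S (S k)) * He (S k) x)).
    { intros t. rewrite (He_SS (S k)). reflexivity. }
    destruct (IHk x) as [H1 H2].
    auto_derive.
    + split; [eexists; exact H2|split; [eexists; exact H1|auto]].
    + rewrite (Derive_eta _ _ _ H2), (Derive_eta _ _ _ H1).
      rewrite (He_SS k). change (match k with 0%nat => 1 | S _ => INR k + 1 end) with (INR (S k)). rewrite !S_INR. ring.
Qed.

Lemma He_deriv k x : is_derive (He k) x (dHe k x).
Proof.
  destruct k.
  - simpl. apply (is_derive_extR (fun _ => 1)). { intros; reflexivity. }
    auto_derive; auto.
  - apply He_deriv_S.
Qed.

Lemma He_S_dHe n x : He (S n) x = x * He n x - dHe n x.
Proof.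
  destruct n. { unfold dHe. rewrite He_0, He_1. ring. }
  rewrite He_SS. unfold dHe. ring.
Qed.

Section WallisSec.
Local Arguments pow : simpl never.

Fixpoint aw (m : nat) : R :=
  match m with O => 1 | S k => aw k * (2 * INR k + 1) / (2 * INR k + 2) end.

Lemma aw_pos m : 0 < aw m.
Proof.
  induction m; simpl aw. lra. pose proof (pos_INR m).
  apply Rdiv_lt_0_compat; [apply Rmult_lt_0_compat|]; lra.
Qed.

Lemma He_even0 m : He (2*m) 0 ^ 2 = aw m * INR (fact (2*m)).
Proof.
  induction m.
  - simpl. rewrite He_0. ring.
  - replace (2 * S m)%nat with (S (S (2*m))) by lia.
    rewrite He_SS. rewrite Rmult_0_l, Rminus_0_l.
    replace (fact (S (S (2*m)))) with ((S (S (2*m))) * ((S (2*m)) * fact (2*m)))%nat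
      by (simpl; lia).
    rewrite !mult_INR. simpl aw.
    replace (INR (S (S (2*m)))) with (2 * INR m + 2) by (rewrite !S_INR, mult_INR; simpl; ring).
    replace (INR (S (2*m))) with (2 * INR m + 1) by (rewrite !S_INR, mult_INR; simpl; ring).
    pose proof (pos_INR m).
    replace ((- ((2 * INR m + 1) * He (2 * m) 0)) ^ 2) with ((2 * INR m + 1)^2 * He (2 * m) 0 ^ 2) by ring.
    rewrite IHm. field. lra.
Qed.

Lemma is_RInt_derive_R (f df : R -> R) (a b : R) :
  (forall x, Rmin a b <= x <= Rmax a b -> is_derive f x (df x)) ->
  (forall x, Rmin a b <= x <= Rmax a b -> continuous df x) ->
  is_RInt df a b (f b - f a).
Proof. intros H1 H2. apply (is_RInt_derive f df a b H1 H2). Qed.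

Lemma contR (f : R -> R) x : ex_derive f x -> continuous f x.
Proof. apply (@ex_derive_continuous R_AbsRing R_NormedModule). Qed.

Definition Iw (n : nat) : R := RInt (fun t => sin t ^ n) 0 (PI/2).

Lemma ex_Iw n a b : ex_RInt (fun t => sin t ^ n) a b.
Proof.
  apply (@ex_RInt_continuous R_CompleteNormedModule). intros. apply (@ex_derive_continuous R_AbsRing R_NormedModule). auto_derive. auto.
Qed.

Lemma Iw_rec n : (INR n + 2) * Iw (S (S n)) = (INR n + 1) * Iw n.
Proof.
  assert (H : is_RInt (fun t => (INR n + 2) * sin t ^ (S (S n)) - (INR n + 1) * sin t ^ n)
                      0 (PI/2) ((fun t => - cos t * sin t ^ (S n)) (PI/2)
                          - (fun t => - cos t * sin t ^ (S n)) 0)).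
  { apply (is_RInt_derive_R (fun t => - cos t * sin t ^ (S n))).
    - intros x _. auto_derive; auto.
      change (match n with 0%nat => 1 | S _ => INR n + 1 end) with (INR (S n)).
      rewrite S_INR. match goal with |- ?A = ?B => change (@eq R A B) end. apply Rminus_diag_uniq.
      match goal with |- ?A - ?B = 0 =>
        replace (A - B) with ((INR n + 1) * sin x ^ n * (1 - (sin x * sin x + cos x * cos x))) by (change (sin x ^ S (S n)) with (sin x * (sin x * sin x ^ n)); change (sin x ^ S n) with (sin x * sin x ^ n); set (p := sin x ^ n); ring) end.
      pose proof (sin2_cos2 x) as Hs; unfold Rsqr in Hs. rewrite Hs. ring.
    - intros x _. apply contR. auto_derive. auto. }
  assert (H1 := RInt_correct _ _ _ (ex_Iw (S (S n)) 0 (PI/2))).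
  assert (H2 := RInt_correct _ _ _ (ex_Iw n 0 (PI/2))).
  assert (H3 := is_RInt_minus _ _ _ _ _ _ (is_RInt_scal _ _ _ (INR n + 2) _ H1)
                                          (is_RInt_scal _ _ _ (INR n + 1) _ H2)).
  assert (E2 : RInt (fun t => (INR n+2)*sin t^S(S n) - (INR n+1)*sin t^n) 0 (PI/2)
                = (INR n + 2) * Iw (S(S n)) - (INR n+1) * Iw n).
  { exact (is_RInt_unique _ _ _ _ H3). }
  assert (E1 := is_RInt_unique _ _ _ _ H).
  rewrite E2 in E1. cbv beta in E1.
  rewrite cos_PI2, sin_0, (pow_i (S n)) in E1 by lia. lra.
Qed.

Lemma Iw_0 : Iw 0 = PI / 2.
Proof.
  unfold Iw. change (fun t : R => sin t ^ 0) with (fun _ : R => 1).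
  rewrite RInt_const. unfold scal; simpl. unfold mult; simpl. ring.
Qed.

Lemma Iw_1 : Iw 1 = 1.
Proof.
  unfold Iw.
  assert (H : is_RInt (fun t => sin t ^ 1) 0 (PI/2) ((fun t => - cos t) (PI/2) - (fun t => - cos t) 0)).
  { apply (is_RInt_derive_R (fun t => - cos t)).
    - intros x _. auto_derive; auto. change (sin x ^ 1) with (sin x * 1). ring.
    - intros x _. apply contR. auto_derive. auto. }
  rewrite (is_RInt_unique _ _ _ _ H). cbv beta. rewrite cos_PI2, cos_0. ring.
Qed.

Lemma Iw_mono n : Iw (S n) <= Iw n.
Proof.
  unfold Iw. apply RInt_le.
  - pose proof PI_RGT_0. lra.
  - apply ex_Iw.
  - apply ex_Iw.
  - intros x Hx. pose proof PI_RGT_0.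
    assert (0 <= sin x) by (apply sin_ge_0; lra).
    assert (sin x <= 1) by apply (proj2 (SIN_bound x)).
    assert (0 <= sin x ^ n) by (apply pow_le; lra).
    change (sin x ^ S n) with (sin x * sin x ^ n). nra.
Qed.

Lemma Iw_even m : Iw (2*m) = aw m * (PI/2).
Proof.
  induction m.
  - simpl. rewrite Iw_0. ring.
  - replace (2 * S m)%nat with (S (S (2*m))) by lia.
    pose proof (Iw_rec (2*m)) as HR. rewrite mult_INR in HR. simpl INR in HR.
    simpl aw. pose proof (pos_INR m).
    apply (Rmult_eq_reg_l (2 * INR m + 2)); [|lra].
    replace (1 + 1) with 2 in HR by ring.
    rewrite HR, IHm. field. lra.
Qed.

Lemma Iw_odd m : Iw (S (2*m)) * (2 * INR m + 1) * aw m = 1.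
Proof.
  induction m.
  - simpl. rewrite Iw_1. ring.
  - replace (2 * S m)%nat with (S (S (2*m))) by lia.
    pose proof (Iw_rec (S (2*m))) as HR. rewrite S_INR, mult_INR in HR. simpl INR in HR.
    simpl aw. pose proof (pos_INR m). rewrite S_INR.
    replace (1 + 1) with 2 in HR by ring.
    replace (Iw (S (S (S (2 * m))))) with ((2 * INR m + 1 + 1) * Iw (S (2 * m)) / (2 * INR m + 1 + 2))
      by (rewrite <- HR; field_simplify; [reflexivity| lra]).
    transitivity (Iw (S (2*m)) * (2 * INR m + 1) * aw m); [field; lra | exact IHm].
Qed.

Lemma wallis_lower m : 2 <= aw m ^ 2 * PI * (2 * INR m + 1).
Proof.
  pose proof (Iw_mono (2*m)) as Hm. rewrite Iw_even in Hm.
  pose proof (Iw_odd m) as Ho. pose proof (aw_pos m). pose proof (pos_INR m).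
  assert (Iw (S (2*m)) = / ((2 * INR m + 1) * aw m)).
  { apply (Rmult_eq_reg_r ((2 * INR m + 1) * aw m)); [|nra].
    rewrite Rinv_l by nra. rewrite <- Rmult_assoc; exact Ho. }
  rewrite H1 in Hm.
  apply (Rmult_le_compat_r ((2 * INR m + 1) * aw m * 2)) in Hm; [|nra].
  replace (/ ((2 * INR m + 1) * aw m) * ((2 * INR m + 1) * aw m * 2)) with 2 in Hm by (field; split; lra).
  nra.
Qed.

Lemma wallis_upper k : aw (S k) ^ 2 * PI * (INR k + 1) <= 1.
Proof.
  pose proof (Iw_mono (S (2*k))) as Hm.
  replace (S (S (2*k))) with (2 * S k)%nat in Hm by lia.
  rewrite Iw_even in Hm.
  pose proof (Iw_odd k) as Ho. pose proof (aw_pos k). pose proof (aw_pos (S k)). pose proof (pos_INR k).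
  assert (E : (2 * INR k + 1) * aw k = (2 * INR k + 2) * aw (S k)).
  { simpl aw. field. lra. }
  assert (Iw (S (2*k)) = / ((2 * INR k + 2) * aw (S k))).
  { apply (Rmult_eq_reg_r ((2 * INR k + 2) * aw (S k))); [|nra].
    rewrite Rinv_l by nra. rewrite <- E, <- Rmult_assoc; exact Ho. }
  rewrite H2 in Hm.
  apply (Rmult_le_compat_r ((2 * INR k + 2) * aw (S k))) in Hm; [|nra].
  replace (/ ((2 * INR k + 2) * aw (S k)) * ((2 * INR k + 2) * aw (S k))) with 1 in Hm by (field; lra).
  nra.
Qed.

End WallisSec.


Lemma mono_dec (f df : R -> R) a b :
  (forall x, is_derive f x (df x)) -> (forall x, a <= x <= b -> df x <= 0) -> a <= b ->
  f b <= f a.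
Proof.
  intros Hd Hn Hab.
  destruct (MVT_gen f a b df) as [c [Hc E]].
  - intros; apply Hd.
  - intros x _. apply continuity_pt_filterlim. apply (@ex_derive_continuous R_AbsRing R_NormedModule).
    eexists; apply Hd.
  - rewrite Rmin_left, Rmax_right in Hc by lra.
    assert (df c <= 0) by (apply Hn; lra). nra.
Qed.

Definition gE (u0 v0 w x : R) := u0 * cos (w*x) + v0 / w * sin (w*x).
Definition gP (u0 v0 w x : R) := - u0 * w * sin (w*x) + v0 * cos (w*x).
Definition FF (u v : R -> R) (D w x : R) :=
  (v x - gP (u 0) (v 0) w x)^2 + D * (u x - gE (u 0) (v 0) w x)^2.

Section ODE.
Variables (u v : R -> R) (D w : R).
Hypothesis Hu : forall x, is_derive u x (v x).
Hypothesis Hv : forall x, is_derive v x (-(D + 1/2 - x^2/4) * u x).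
Hypothesis Hw : w * w = D.
Hypothesis Hw0 : 0 < w.

Lemma FF_deriv x : is_derive (FF u v D w) x (2 * (v x - gP (u 0) (v 0) w x) * ((x^2/4 - 1/2) * u x)).
Proof.
  unfold FF, gE, gP. auto_derive.
  - repeat split; auto; try (eexists; apply Hu); try (eexists; apply Hv); lra.
  - rewrite (Derive_eta _ _ _ (Hu x)), (Derive_eta _ _ _ (Hv x)).
    rewrite <- Hw. field. lra.
Qed.

Lemma E_deriv x : is_derive (fun x => v x ^ 2 + (D + 1/2 - x^2/4) * u x ^ 2) x (-(x/2) * u x ^ 2).
Proof.
  auto_derive.
  - repeat split; auto; try (eexists; apply Hu); try (eexists; apply Hv).
  - rewrite (Derive_eta _ _ _ (Hu x)), (Derive_eta _ _ _ (Hv x)). field.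
Qed.

Lemma sqF_deriv dl x : 0 < dl -> is_derive (fun x => sqrt (FF u v D w x + dl) - 2 * (x^3/12 + x/2)) x
   ((2 * (v x - gP (u 0) (v 0) w x) * ((x^2/4 - 1/2) * u x)) / (2 * sqrt (FF u v D w x + dl)) - 2 * (x^2/4 + 1/2)).
Proof.
  intros Hdl.
  assert (HF : 0 <= FF u v D w x) by (unfold FF; apply Rplus_le_le_0_compat; [apply pow2_ge_0| apply Rmult_le_pos; [nra| apply pow2_ge_0]]).
  auto_derive.
  - repeat split; auto; try (eexists; apply FF_deriv); lra.
  - rewrite (Derive_eta _ _ _ (FF_deriv x)). field.
    apply Rgt_not_eq, sqrt_lt_R0. lra.
Qed.

Lemma u_bound : 1 <= D -> v 0 ^ 2 + (D + 1/2) * u 0 ^ 2 <= 3/2 * D ->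
  forall x, 0 <= x -> x * x <= D -> Rabs (u x) <= 2.
Proof.
  intros HD H0 x Hx Hxx.
  pose proof (mono_dec (fun x => v x ^ 2 + (D + 1/2 - x^2/4) * u x ^ 2)
                (fun x => -(x/2) * u x ^ 2) 0 x E_deriv) as M.
  assert (M' : v x ^ 2 + (D + 1 / 2 - x ^ 2 / 4) * u x ^ 2 <=
               v 0 ^ 2 + (D + 1 / 2 - 0 ^ 2 / 4) * u 0 ^ 2).
  { apply M; [|lra]. intros t Ht. pose proof (pow2_ge_0 (u t)). nra. }
  replace (0 ^ 2 / 4) with 0 in M' by (simpl; field).
  assert (Hux : u x ^ 2 <= 2).
  { pose proof (pow2_ge_0 (v x)). pose proof (pow2_ge_0 (u x)).
    assert ((3 * D / 4) * u x ^ 2 <= (D + 1 / 2 - x ^ 2 / 4) * u x ^ 2).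
    { apply Rmult_le_compat_r; [lra|]. simpl. nra. }
    nra. }
  rewrite <- (pow2_abs (u x)) in Hux. pose proof (Rabs_pos (u x)). nra.
Qed.

Lemma ode_bound : 1 <= D -> v 0 ^ 2 + (D + 1/2) * u 0 ^ 2 <= 3/2 * D ->
  forall X, 0 <= X -> X * X <= D ->
  Rabs (u X - gE (u 0) (v 0) w X) <= (X^3/3 + 2*X) / w.
Proof.
  intros HD H0 X HX HXX.
  destruct (Req_dec X 0) as [HX0|HX0].
  { subst X. unfold gE. rewrite Rmult_0_r, sin_0, cos_0.
    replace (u 0 - (u 0 * 1 + v 0 / w * 0)) with 0 by (field; lra).
    rewrite Rabs_R0. simpl. unfold Rdiv. rewrite !Rmult_0_l. lra. }
  assert (HXp : 0 < X) by lra.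
  set (Q := X^3/12 + X/2).
  assert (HQ : 0 < Q) by (unfold Q; simpl; nra).
  set (dl := (2*Q)^2).
  assert (Hdl : 0 < dl) by (unfold dl; nra).
  pose proof (mono_dec _ _ 0 X (fun x => sqF_deriv dl x Hdl)) as M.
  assert (M' : sqrt (FF u v D w X + dl) - 2 * (X ^ 3 / 12 + X / 2) <=
               sqrt (FF u v D w 0 + dl) - 2 * (0 ^ 3 / 12 + 0 / 2)).
  { apply M; [|lra]. intros t Ht.
    assert (HF : 0 <= FF u v D w t) by (unfold FF; apply Rplus_le_le_0_compat; [apply pow2_ge_0| apply Rmult_le_pos; [nra| apply pow2_ge_0]]).
    set (S := sqrt (FF u v D w t + dl)).
    assert (HS : 0 < S) by (apply sqrt_lt_R0; lra).
    assert (HS2 : S * S = FF u v D w t + dl) by (apply sqrt_sqrt; lra).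
    set (ep := v t - gP (u 0) (v 0) w t).
    assert (Hep : ep ^ 2 <= S * S).
    { rewrite HS2. unfold FF in *. fold ep. pose proof (pow2_ge_0 (u t - gE (u 0) (v 0) w t)). nra. }
    assert (Hep' : Rabs ep <= S).
    { rewrite <- (pow2_abs ep) in Hep. pose proof (Rabs_pos ep). nra. }
    assert (Hu2 : Rabs (u t) <= 2) by (apply u_bound; auto; nra).
    assert (Hq : Rabs (t^2/4 - 1/2) <= t^2/4 + 1/2).
    { apply Rabs_le. pose proof (pow2_ge_0 t). lra. }
    assert (HP : ep * ((t^2/4 - 1/2) * u t) <= S * (2 * (t^2/4 + 1/2))).
    { eapply Rle_trans; [apply Rle_abs|]. rewrite !Rabs_mult.
      assert (Hqu : Rabs (t^2/4 - 1/2) * Rabs (u t) <= (t^2/4 + 1/2) * 2).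
      { apply Rmult_le_compat; try apply Rabs_pos; lra. }
      assert (0 <= Rabs (t^2/4 - 1/2) * Rabs (u t)) by (apply Rmult_le_pos; apply Rabs_pos).
      pose proof (Rabs_pos ep). nra. }
    assert (2 * ep * ((t ^ 2 / 4 - 1 / 2) * u t) / (2 * S) <= 2 * (t ^ 2 / 4 + 1 / 2)).
    { apply (Rmult_le_reg_r (2 * S)); [lra|].
      unfold Rdiv. rewrite Rmult_assoc, Rinv_l, Rmult_1_r by lra. nra. }
    fold S. fold ep. lra. }
  assert (HF0 : FF u v D w 0 = 0).
  { unfold FF, gP, gE. rewrite Rmult_0_r, sin_0, cos_0. field. lra. }
  rewrite HF0, Rplus_0_l in M'. assert (Hsd : sqrt dl = 2 * Q) by (unfold dl; apply sqrt_pow2; lra). rewrite Hsd in M'.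
  fold Q in M'. replace (0 ^ 3 / 12 + 0 / 2) with 0 in M' by (simpl; field).
  assert (HFX : 0 <= FF u v D w X) by (unfold FF; apply Rplus_le_le_0_compat; [apply pow2_ge_0| apply Rmult_le_pos; [nra| apply pow2_ge_0]]).
  assert (Hs : sqrt (FF u v D w X + dl) <= 4 * Q) by lra.
  assert (Hs2 : FF u v D w X + dl <= (4 * Q) * (4 * Q)).
  { rewrite <- (sqrt_sqrt (FF u v D w X + dl)) by lra.
    apply Rmult_le_compat; auto; apply sqrt_pos. }
  set (e := u X - gE (u 0) (v 0) w X).
  assert (He : w * w * e ^ 2 <= (4*Q) * (4*Q)).
  { unfold FF in Hs2. fold e in Hs2. rewrite Hw. pose proof (pow2_ge_0 (v X - gP (u 0) (v 0) w X)). nra. }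
  assert (Hae : Rabs e * w <= 4 * Q).
  { rewrite <- (pow2_abs e) in He. pose proof (Rabs_pos e). nra. }
  replace (X ^ 3 / 3 + 2 * X) with (4 * Q) by (unfold Q; field).
  apply (Rmult_le_reg_r w); [lra|].
  unfold Rdiv. rewrite Rmult_assoc, Rinv_l, Rmult_1_r by lra. exact Hae.
Qed.
End ODE.


Definition sc (n : nat) := Rpower (2 / (PI * INR (S n))) (1/4).
Definition cc (n : nat) := / (sqrt (INR (fact (S n))) * sc n).
Definition uu n x := He (S n) x * exp (-(x^2/4)) * cc n.
Definition vv n x := (INR (S n) * He n x - x/2 * He (S n) x) * exp (-(x^2/4)) * cc n.

Lemma INR_S_pos n : 0 < INR (S n).
Proof. apply lt_0_INR. lia. Qed.

Lemma sc_pos n : 0 < sc n.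
Proof. unfold sc, Rpower. apply exp_pos. Qed.

Lemma sc_4 n : sc n ^ 4 = 2 / (PI * INR (S n)).
Proof.
  assert (Hp : 0 < 2 / (PI * INR (S n))).
  { pose proof PI_RGT_0. pose proof (INR_S_pos n).
    apply Rdiv_lt_0_compat; [lra| apply Rmult_lt_0_compat; lra]. }
  rewrite <- Rpower_pow by apply sc_pos. unfold sc.
  rewrite Rpower_mult. replace (1/4 * INR 4) with 1 by (simpl; field).
  apply Rpower_1; auto.
Qed.

Lemma fact_pos' k : 0 < sqrt (INR (fact k)).
Proof. apply sqrt_lt_R0. apply lt_0_INR. apply lt_O_fact. Qed.

Lemma cc_pos n : 0 < cc n.
Proof. unfold cc. apply Rinv_0_lt_compat. apply Rmult_lt_0_compat. apply fact_pos'. apply sc_pos. Qed.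

Lemma r_uu n x : r (S n) x = uu n x - sin ((1 - INR (S n)) / 2 * PI + sqrt (INR (S n)) * x).
Proof.
  unfold r, H, uu, cc. apply (f_equal (fun z => z - _)). rewrite exp_Ropp.
  pose proof (fact_pos' (S n)) as P1. pose proof (sc_pos n) as P2. pose proof (exp_pos (x^2/4)) as P3.
  unfold sc in *. change RinvImpl.Rinv with Rinv. field; repeat split; lra.
Qed.

Lemma expfix x : exp (- (x * (x * 1) * / 4)) = exp (- (x ^ 2 / 4)).
Proof. reflexivity. Qed.

Lemma uu_deriv n x : is_derive (uu n) x (vv n x).
Proof.
  unfold uu, vv. auto_derive.
  - repeat split; auto. eexists; apply He_deriv_S.
  - rewrite (Derive_eta _ _ _ (He_deriv_S n x)).
    change (match n with 0%nat => 1 | S _ => INR n + 1 end) with (INR (S n)). rewrite (expfix x). field.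
Qed.

Lemma vv_deriv n x : is_derive (vv n) x (-(INR (S n) + 1/2 - x^2/4) * uu n x).
Proof.
  unfold uu, vv. auto_derive.
  - repeat split; auto; eexists; [apply He_deriv| apply He_deriv_S].
  - rewrite (Derive_eta _ _ _ (He_deriv_S n x)), (Derive_eta _ _ _ (He_deriv n x)).
    change (match n with 0%nat => 1 | S _ => INR n + 1 end) with (INR (S n)).
    pose proof (He_S_dHe n x) as E.
    replace (dHe n x) with (x * He n x - He (S n) x) by lra.
    rewrite (expfix x). field.
Qed.

Lemma sin_cos_npi m : sin (INR m * PI) = 0 /\ cos (INR m * PI) = (-1)^m.
Proof.
  induction m.
  - simpl. rewrite Rmult_0_l, sin_0, cos_0. auto.
  - rewrite S_INR. replace ((INR m + 1) * PI) with (INR m * PI + PI) by ring.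
    rewrite neg_sin, neg_cos. destruct IHm as [A1 A2]. rewrite A1, A2. simpl. split; ring.
Qed.

Lemma sin_plus_npi z d : sin (z + INR d * PI) = (-1)^d * sin z.
Proof.
  induction d.
  - simpl. rewrite Rmult_0_l, Rplus_0_r. ring.
  - rewrite S_INR. replace (z + (INR d + 1) * PI) with ((z + INR d * PI) + PI) by ring.
    rewrite neg_sin, IHd. simpl. ring.
Qed.

Lemma He_even_sign m : 0 < (-1)^m * He (2*m) 0.
Proof.
  induction m.
  - simpl. rewrite He_0. lra.
  - replace (2 * S m)%nat with (S (S (2*m))) by lia.
    rewrite He_SS, Rmult_0_l, Rminus_0_l.
    pose proof (pos_INR (S (2*m))).
    replace ((-1) ^ S m * - (INR (S (2 * m)) * He (2 * m) 0))
      with (INR (S (2*m)) * ((-1)^m * He (2*m) 0)) by (simpl; ring).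
    apply Rmult_lt_0_compat; auto. rewrite S_INR. pose proof (pos_INR (2*m)). lra.
Qed.

Lemma uu0 n : uu n 0 = He (S n) 0 * cc n.
Proof. unfold uu. replace (- (0 ^ 2 / 4)) with 0 by (simpl; field). rewrite exp_0. ring. Qed.

Lemma vv0 n : vv n 0 = INR (S n) * He n 0 * cc n.
Proof. unfold vv. replace (- (0 ^ 2 / 4)) with 0 by (simpl; field). rewrite exp_0. unfold Rdiv. rewrite Rmult_0_l, Rmult_0_l, Rminus_0_r, Rmult_1_r. reflexivity. Qed.

Lemma cc2 n : cc n ^ 2 * (INR (fact (S n)) * sc n ^ 2) = 1.
Proof.
  unfold cc. pose proof (fact_pos' (S n)) as P1. pose proof (sc_pos n) as P2.
  rewrite <- (sqrt_sqrt (INR (fact (S n)))) at 2 by (apply pos_INR).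
  field. lra.
Qed.

Lemma pm1_sq m : (-1)^m * (-1)^m = 1.
Proof. rewrite <- Rpow_mult_distr. replace (-1 * -1) with 1 by ring. apply pow1. Qed.

Lemma div_le a b c d : 0 < b -> 0 < d -> a * d <= c * b -> a / b <= c / d.
Proof.
  intros Hb Hd H0.
  replace (a / b) with ((a * d) * / (b * d)) by (field; lra).
  replace (c / d) with ((c * b) * / (b * d)) by (field; lra).
  apply Rmult_le_compat_r; auto. apply Rlt_le, Rinv_0_lt_compat, Rmult_lt_0_compat; auto.
Qed.

Definition ICprop n :=
  let D := INR (S n) in
  Rabs (uu n 0 - sin ((1 - D)/2 * PI)) + Rabs (vv n 0 / sqrt D - cos ((1 - D)/2 * PI)) <= 2 / D
  /\ vv n 0 ^ 2 + (D + 1/2) * uu n 0 ^ 2 <= 3/2 * D.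

Lemma IC_even k : ICprop (S (2*k)).
Proof.
  unfold ICprop.
  set (D := INR (S (S (2*k)))).
  assert (HD : D = 2 * INR k + 2) by (unfold D; rewrite !S_INR, mult_INR; simpl; ring).
  pose proof (pos_INR k) as Hk.
  assert (Hphi : (1 - D) / 2 * PI = PI/2 - INR (S k) * PI) by (rewrite HD, S_INR; field).
  rewrite Hphi, sin_shift, cos_shift.
  destruct (sin_cos_npi (S k)) as [S1 S2]. rewrite S1, S2.
  rewrite vv0, He_odd0, Rmult_0_r, Rmult_0_l.
  replace (0 / sqrt D - 0) with 0 by (unfold Rdiv; ring). rewrite Rabs_R0, Rplus_0_r.
  rewrite uu0.
  replace (S (S (2*k))) with (2 * S k)%nat by lia.
  set (t := (-1)^(S k) * He (2 * S k) 0 * cc (S (2*k))).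
  assert (Ht : 0 < t).
  { unfold t. apply Rmult_lt_0_compat. apply He_even_sign. apply cc_pos. }
  assert (Hu : He (2 * S k) 0 * cc (S (2 * k)) = (-1)^(S k) * t).
  { unfold t. rewrite <- !Rmult_assoc, pm1_sq. ring. }
  rewrite Hu.
  pose proof (He_even0 (S k)) as E0.
  pose proof (cc2 (S (2*k))) as E1.
  replace (S (S (2*k))) with (2 * S k)%nat in E1 by lia.
  pose proof (sc_4 (S (2*k))) as E2. fold D in E2.
  set (A := aw (S k)) in *.
  set (sc' := sc (S (2*k))) in *.
  set (cc' := cc (S (2*k))) in *.
  set (F := INR (fact (2 * S k))) in *.
  pose proof (sc_pos (S (2*k))) as Hsc. fold sc' in Hsc.
  assert (HF : 0 < F) by (unfold F; apply lt_0_INR, lt_O_fact).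
  assert (Ht2 : t^2 * sc'^2 = A).
  { replace (t^2) with (((-1)^(S k) * (-1)^(S k)) * (He (2 * S k) 0 ^ 2 * cc'^2)) by (unfold t; ring).
    rewrite pm1_sq, Rmult_1_l.
    rewrite E0. replace (A * F * cc' ^ 2 * sc' ^ 2) with (A * (cc' ^ 2 * (F * sc' ^ 2))) by ring.
    rewrite E1. ring. }
  pose proof (wallis_lower (S k)) as WL. pose proof (wallis_upper k) as WU. fold A in WL, WU.
  rewrite S_INR in WL.
  pose proof PI_RGT_0 as Hpi.
  assert (Ht4 : t^4 = A^2 * PI * (INR k + 1)).
  { assert (t^4 * sc'^4 = A^2) by (rewrite <- Ht2; ring).
    rewrite E2 in H. rewrite HD in H.
    apply (Rmult_eq_reg_r (2 / (PI * (2 * INR k + 2)))). rewrite H. field. lra.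
    apply Rgt_not_eq. apply Rdiv_lt_0_compat; nra. }
  assert (T1 : t^4 <= 1) by lra.
  assert (T2 : 2 * (INR k + 1) / (2 * INR k + 3) <= t^4).
  { rewrite Ht4. apply (Rmult_le_reg_r (2 * INR k + 3)); [lra|].
    unfold Rdiv. rewrite Rmult_assoc, Rinv_l, Rmult_1_r by lra. nra. }
  assert (Tle1 : t <= 1).
  { destruct (Rle_dec t 1); auto. exfalso. assert (1 < t^2) by nra. nra. }
  assert (Ht4t : t^4 <= t) by (assert (t^2 <= 1) by nra; nra).
  split.
  - replace ((-1)^(S k) * t - (-1)^(S k)) with ((-1)^(S k) * (t - 1)) by ring.
    rewrite Rabs_mult, pow_1_abs, Rmult_1_l, Rabs_left1 by lra.
    assert (1 - t^4 <= 1 / (2 * INR k + 3)).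
    { assert (1 - 2 * (INR k + 1) / (2 * INR k + 3) = 1 / (2 * INR k + 3)) by (field; lra). lra. }
    rewrite HD. assert (1 / (2 * INR k + 3) <= 2 / (2 * INR k + 2)).
    { apply Rle_trans with (1 / (2 * INR k + 2)).
      apply Rmult_le_compat_l; [lra|]. apply Rinv_le_contravar; lra.
      apply Rmult_le_compat_r; [apply Rlt_le, Rinv_0_lt_compat; lra| lra]. }
    lra.
  - replace (0 ^ 2) with 0 by ring.
    replace (((-1)^(S k) * t)^2) with (t^2) by (rewrite Rpow_mult_distr, <- pow_mult; replace (S k * 2)%nat with (2 * S k)%nat by lia; rewrite pow_mult; replace ((-1)^2) with 1 by ring; rewrite pow1; ring).
    assert (t^2 <= 1) by nra. rewrite HD in *. nra.
Qed.

Lemma IC_odd m : ICprop (2*m).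
Proof.
  unfold ICprop.
  set (D := INR (S (2*m))).
  assert (HD : D = 2 * INR m + 1) by (unfold D; rewrite !S_INR, mult_INR; simpl; ring).
  pose proof (pos_INR m) as Hm.
  assert (HD1 : 1 <= D) by lra.
  assert (Hphi : (1 - D) / 2 * PI = - (INR m * PI)) by (rewrite HD; field).
  rewrite Hphi, sin_neg, cos_neg.
  destruct (sin_cos_npi m) as [S1 S2]. rewrite S1, S2.
  rewrite uu0, He_odd0, Rmult_0_l.
  replace (0 - - 0) with 0 by ring. rewrite Rabs_R0, Rplus_0_l.
  rewrite vv0. fold D.
  set (w := sqrt D).
  assert (Hw : w * w = D) by (apply sqrt_sqrt; lra).
  assert (Hw0 : 0 < w) by (apply sqrt_lt_R0; lra).
  set (t := (-1)^m * He (2 * m) 0 * cc (2*m) * w).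
  assert (Ht : 0 < t).
  { unfold t. apply Rmult_lt_0_compat; auto. apply Rmult_lt_0_compat. apply He_even_sign. apply cc_pos. }
  assert (Hv : D * He (2 * m) 0 * cc (2 * m) / w = (-1)^m * t).
  { unfold t. rewrite <- Hw.
    replace ((-1)^m * ((-1)^m * He (2 * m) 0 * cc (2 * m) * w)) with (((-1)^m * (-1)^m) * (He (2 * m) 0 * cc (2 * m) * w)) by ring.
    rewrite pm1_sq. field. lra. }
  rewrite Hv.
  pose proof (He_even0 m) as E0.
  pose proof (cc2 (2*m)) as E1.
  pose proof (sc_4 (2*m)) as E2. fold D in E2.
  set (A := aw m) in *.
  set (sc' := sc (2*m)) in *.
  set (cc' := cc (2*m)) in *.
  set (F := INR (fact (2 * m))) in *.
  assert (EF : INR (fact (S (2*m))) = D * F) by (unfold F, D; rewrite <- mult_INR; reflexivity).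
  rewrite EF in E1.
  pose proof (sc_pos (2*m)) as Hsc. fold sc' in Hsc.
  assert (HF : 0 < F) by (unfold F; apply lt_0_INR, lt_O_fact).
  assert (Ht2 : t^2 * sc'^2 = A).
  { replace (t^2) with (((-1)^m * (-1)^m) * (He (2 * m) 0 ^ 2 * cc'^2 * (w * w))) by (unfold t; ring).
    rewrite pm1_sq, Rmult_1_l, E0, Hw.
    replace (A * F * cc' ^ 2 * D * sc' ^ 2) with (A * (cc' ^ 2 * (D * F * sc' ^ 2))) by ring.
    rewrite E1. ring. }
  pose proof PI_RGT_0 as Hpi.
  assert (Ht4 : t^4 = A^2 * PI * D / 2).
  { assert (E3 : t^4 * sc'^4 = A^2) by (rewrite <- Ht2; ring).
    rewrite E2 in E3.
    apply (Rmult_eq_reg_r (2 / (PI * D))). rewrite E3. field. lra.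
    apply Rgt_not_eq. apply Rdiv_lt_0_compat; nra. }
  pose proof (wallis_lower m) as WL. fold A in WL.
  assert (T1 : 1 <= t^4) by (rewrite Ht4, HD; lra).
  assert (T2 : t^4 <= 2 /\ t^4 - 1 <= 2 / D).
  { destruct m as [|k].
    - unfold A in Ht4. simpl aw in Ht4. rewrite HD in Ht4 |- *. simpl INR in Ht4 |- *.
      pose proof PI_4. split; [|replace (2 / (2 * 0 + 1)) with 2 by field]; nra.
    - pose proof (wallis_upper k) as WU. fold A in WU.
      rewrite S_INR in HD. pose proof (pos_INR k).
      assert (t^4 <= 1 + 1 / (2 * INR k + 2)).
      { rewrite Ht4, HD.
        apply Rle_trans with ((2 * INR k + 3) / (2 * (INR k + 1))).
        - apply div_le; [lra|lra|].
          assert (0 <= 2 * (INR k + 1) + 1) by lra.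
          assert (HH : A ^ 2 * PI * (INR k + 1) * (2 * (INR k + 1) + 1) <= 1 * (2 * (INR k + 1) + 1)).
          { apply Rmult_le_compat_r; lra. }
          nra.
        - right. field. lra. }
      assert (1 / (2 * INR k + 2) <= 1/2).
      { apply Rmult_le_compat_l; [lra|]. apply Rinv_le_contravar; lra. }
      split; [lra|].
      assert (1 / (2 * INR k + 2) <= 2 / D).
      { rewrite HD. apply div_le; nra. }
      lra. }
  destruct T2 as [T2 T3].
  assert (Tge1 : 1 <= t).
  { destruct (Rle_dec 1 t); auto. exfalso. assert (t^2 < 1) by nra. nra. }
  assert (Ht4t : t <= t^4) by (assert (1 <= t^2) by nra; nra).
  split.
  - replace ((-1)^m * t - (-1)^m) with ((-1)^m * (t - 1)) by ring.
    rewrite Rabs_mult, pow_1_abs, Rmult_1_l, Rabs_right by lra. lra.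
  - replace (0 ^ 2) with 0 by ring.
    replace ((D * He (2 * m) 0 * cc') ^ 2) with (D * t^2).
    2:{ replace (t^2) with (((-1)^m * (-1)^m) * (He (2 * m) 0 ^ 2 * cc'^2 * (w * w))) by (unfold t; ring).
        rewrite pm1_sq, Hw. ring. }
    assert (t^2 <= 3/2) by nra. nra.
Qed.


Lemma IC n : ICprop n.
Proof.
  destruct (Nat.Even_or_Odd n) as [[m Hm]|[m Hm]]; subst n.
  - apply IC_odd.
  - replace (2 * m + 1)%nat with (S (2*m)) by lia. apply IC_even.
Qed.

Lemma main_pos n X : 0 <= X <= sqrt (INR (S n)) ->
  Rabs (r (S n) X) <= (X^3/3 + 2*X) / sqrt (INR (S n)) + 2 / INR (S n).
Proof.
  intros [HX0 HX1].
  rewrite r_uu.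
  destruct (IC n) as [I1 I2]. cbv zeta in I1, I2.
  set (D := INR (S n)) in *.
  set (w := sqrt D) in *.
  assert (HD : 1 <= D) by (unfold D; rewrite S_INR; pose proof (pos_INR n); lra).
  assert (Hw : w * w = D) by (apply sqrt_sqrt; lra).
  assert (Hw0 : 0 < w) by (apply sqrt_lt_R0; lra).
  assert (HXX : X * X <= D) by (rewrite <- Hw; apply Rmult_le_compat; lra).
  pose proof (ode_bound (uu n) (vv n) D w (uu_deriv n) (vv_deriv n) Hw Hw0 HD I2 X HX0 HXX) as B.
  set (phi := (1 - D) / 2 * PI) in *.
  rewrite sin_plus.
  replace (uu n X - (sin phi * cos (w * X) + cos phi * sin (w * X)))
    with ((uu n X - gE (uu n 0) (vv n 0) w X) +
          ((uu n 0 - sin phi) * cos (w * X) + (vv n 0 / w - cos phi) * sin (w * X)))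
    by (unfold gE; ring).
  eapply Rle_trans; [apply Rabs_triang|].
  apply Rplus_le_compat; auto.
  eapply Rle_trans; [apply Rabs_triang|]. rewrite !Rabs_mult.
  pose proof (Rabs_pos (uu n 0 - sin phi)). pose proof (Rabs_pos (vv n 0 / w - cos phi)).
  assert (Rabs (cos (w * X)) <= 1) by (apply Rabs_le; apply COS_bound).
  assert (Rabs (sin (w * X)) <= 1) by (apply Rabs_le; apply SIN_bound).
  nra.
Qed.

Lemma r_opp d x : Rabs (r d (-x)) = Rabs (r d x).
Proof.
  assert (E : r d (-x) = (-1)^d * r d x).
  { unfold r, H. rewrite He_opp.
    replace ((-x)^2) with (x^2) by ring.
    set (a := (1 - INR d) / 2 * PI).
    replace (sin (a + sqrt (INR d) * - x)) with ((-1)^d * sin (a + sqrt (INR d) * x)).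
    - unfold Rdiv. ring.
    - rewrite <- (sin_PI_x (a + sqrt (INR d) * - x)).
      replace (PI - (a + sqrt (INR d) * - x)) with ((a + sqrt (INR d) * x) + INR d * PI)
        by (unfold a; field).
      rewrite sin_plus_npi. reflexivity. }
  rewrite E, Rabs_mult, pow_1_abs, Rmult_1_l. reflexivity.
Qed.

Theorem lemmaA6 :
  exists C : R, forall (d : nat) (x : R),
    (1 <= d)%nat -> Rabs x <= sqrt (INR d) ->
    Rabs (r d x) <=
      C * Rmax (Rmax (Rabs x ^ 3 / sqrt (INR d)) (Rabs x / sqrt (INR d)))
               (Rmax (x ^ 2 / INR d) (1 / INR d)).
Proof.
  exists 5. intros d x Hd Hx.
  destruct d as [|n]; [lia|].
  assert (Er : Rabs (r (S n) x) = Rabs (r (S n) (Rabs x))).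
  { destruct (Rle_dec 0 x).
    - rewrite (Rabs_right x) by lra. reflexivity.
    - rewrite (Rabs_left x) by lra. rewrite r_opp. reflexivity. }
  rewrite Er.
  pose proof (Rabs_pos x) as Hx0.
  pose proof (main_pos n (Rabs x) (conj Hx0 Hx)) as M.
  set (X := Rabs x) in *.
  set (D := INR (S n)) in *.
  set (w := sqrt D) in *.
  assert (HD : 1 <= D) by (unfold D; rewrite S_INR; pose proof (pos_INR n); lra).
  assert (Hw0 : 0 < w) by (apply sqrt_lt_R0; lra).
  set (Mx := Rmax (Rmax (X ^ 3 / w) (X / w)) (Rmax (x ^ 2 / D) (1 / D))).
  assert (M1 : X^3 / w <= Mx) by (unfold Mx; eapply Rle_trans; [apply Rmax_l|apply Rmax_l]).
  assert (M2 : X / w <= Mx) by (unfold Mx; eapply Rle_trans; [apply Rmax_r|apply Rmax_l]).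
  assert (M3 : 1 / D <= Mx) by (unfold Mx; eapply Rle_trans; [apply Rmax_r|apply Rmax_r]).
  assert (M4 : 0 < 1 / D) by (apply Rdiv_lt_0_compat; lra).
  assert (Eq : (X ^ 3 / 3 + 2 * X) / w + 2 / D = (1/3) * (X^3 / w) + 2 * (X / w) + 2 * (1 / D))
    by (field; lra).
  rewrite Eq in M. lra.
Qed.
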